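(* Let $(X,d)$ be a quasi-pseudometric space and $\varphi:X\to\mathbb{R}\cup\{\infty\}$ a proper bounded below function. For $x\in\operatorname{dom}\varphi$ let $S(x)=\{y\in X:\varphi(y)+d(y,x)\le\varphi(x)\}$ and $J(x)=\inf\varphi(S(x))$. Let $x_0\in\operatorname{dom}\varphi$. Then one of the following two situations occurs. 1. There exist $m\in\mathbb{N}_0$ and points $x_1,\dots,x_m$ such that for all $0\le k\le m-1$: $\varphi(x_k)>J(x_k)$, $x_{k+1}\in S(x_k)$ and $\varphi(x_{k+1})<(\varphi(x_k)+J(x_k))/2$; and $\varphi(x_m)=J(x_m)$. In this case, putting $z=x_m$: (i) $S(x_{k+1})\subseteq S(x_k)$ and $\varphi(x_{k+1})<\varphi(x_k)$ for all $0\le k\le m-1$; (ii) $z\in S(x_k)$ and $S(z)\subseteq S(x_k)$ for $0\le k\le m$; (iii) $\varphi(y)=\varphi(z)=J(z)$ for all $y\in S(z)$; (iv) $S(y)\subseteq\overline{\{y\}}$ for all $y\in S(z)$. 2. There exists a sequence $(x_n)_{n\in\mathbb{N}_0}$ (starting at $x_0$) such that for all $n\in\mathbb{N}_0$: $\varphi(x_n)>J(x_n)$, $x_{n+1}\in S(x_n)$ and $\varphi(x_{n+1})<(\varphi(x_n)+J(x_n))/2$. In this case: (i) $S(x_{n+1})\subseteq S(x_n)$ and $\varphi(x_{n+1})<\varphi(x_n)$ for all $n$; (ii) the limits $\alpha:=\lim_n\varphi(x_n)=\lim_n J(x_n)$ exist and are real; (iii) $x_{n+k}\in S(x_n)$ for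 all $n,k\in\mathbb{N}_0$; (iv) $(x_n)$ is right $K$-Cauchy. If moreover $X$ is sequentially right $K$-complete and $\varphi$ is nearly lower semicontinuous, then $(x_n)$ converges to a point $z\in X$ such that (i) $z\in S(x_n)$ and $S(z)\subseteq S(x_n)$ for all $n\in\mathbb{N}_0$; (ii) $\varphi(y)=\varphi(z)=J(z)=\alpha$ for all $y\in S(z)$; (iii) $S(y)\subseteq\overline{\{y\}}$ for all $y\in S(z)$.
   Context: A quasi-pseudometric on $X$ is $d:X\times X\to[0,\infty)$ with $d(x,x)=0$ and $d(x,z)\le d(x,y)+d(y,z)$ (no symmetry). Topology $\tau_d$: neighbourhood base at $x$ given by $\{y:d(x,y)<r\}$, $r>0$; so $x_n\to x$ iff $d(x,x_n)\to0$, and $\overline{\{y\}}=\{x: d(x,y)=0\}$. A sequence $(x_n)$ is right $K$-Cauchy if for every $\varepsilon>0$ there is $n_\varepsilon$ with $d(x_{n+k},x_n)<\varepsilon$ for all $n\ge n_\varepsilon$, $k\in\mathbb{N}$; $X$ is sequentially right $K$-complete if every right $K$-Cauchy sequence converges (in $\tau_d$). $\varphi$ is proper if $\operatorname{dom}\varphi=\{x:\varphi(x)<\infty\}\ne\emptyset$. $\varphi$ is nearly lower semicontinuous if $\varphi(x)\le\liminf_n\varphi(x_n)$ for every sequence with pairwise distinct terms converging to $x$. $\mathbb{N}_0=\{0,1,2,\dots\}$. *)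

(* Defs.v *)
From HB Require Import structures.
From mathcomp Require Import all_boot all_order all_algebra.
From mathcomp Require Import all_classical all_reals all_analysis.
Set Implicit Arguments. Unset Strict Implicit. Unset Printing Implicit Defensive.
Import Order.TTheory GRing.Theory Num.Theory numFieldNormedType.Exports.
Local Open Scope classical_set_scope.
Local Open Scope ring_scope.

Section QPM.
Context {R : realType} {X : Type}.

Definition quasi_pseudometric (d : X -> X -> R) : Prop :=
  (forall x y, 0 <= d x y) /\ (forall x, d x x = 0) /\
  (forall x y z, d x z <= d x y + d y z).

(* x_n --> x in tau_d  iff  d(x, x_n) --> 0 *)
Definition qconverges (d : X -> X -> R) (u : nat -> X) (x : X) : Prop :=
  (fun n => d x (u n)) @ \oo --> 0.

(* closure in tau_d (neighbourhood base {y : d x y < r}) *)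
Definition qclosure (d : X -> X -> R) (A : set X) : set X :=
  [set x | forall r : R, 0 < r -> exists2 a, A a & d x a < r].

Definition right_K_Cauchy (d : X -> X -> R) (u : nat -> X) : Prop :=
  forall eps : R, 0 < eps -> exists N : nat,
    forall n k : nat, (N <= n)%N -> d (u (n + k)%N) (u n) < eps.

Definition seq_right_K_complete (d : X -> X -> R) : Prop :=
  forall u : nat -> X, right_K_Cauchy d u -> exists x, qconverges d u x.

(* phi : X -> R u {+oo} : extended-real valued, never -oo *)
Definition phi_dom (phi : X -> \bar R) : set X := [set x | phi x \is a fin_num].

Definition phi_proper (phi : X -> \bar R) : Prop := phi_dom phi !=set0.

Definition bounded_below (phi : X -> \bar R) : Prop :=
  exists c : R, forall x, (c%:E <= phi x)%E.

Definition nearly_lsc (d : X -> X -> R) (phi : X -> \bar R) : Prop :=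
  forall (u : nat -> X) (x : X), (forall i j, i <> j -> u i <> u j) ->
    qconverges d u x -> (phi x <= limn_einf (fun n => phi (u n)))%E.

Definition Sset (d : X -> X -> R) (phi : X -> \bar R) (x : X) : set X :=
  [set y | (phi y + (d y x)%:E <= phi x)%E].

Definition Jval (d : X -> X -> R) (phi : X -> \bar R) (x : X) : \bar R :=
  ereal_inf (phi @` Sset d phi x).

Definition step_cond (d : X -> X -> R) (phi : X -> \bar R) (a b : X) : Prop :=
  (Jval d phi a < phi a)%E /\ Sset d phi a b /\
  (phi b < (phi a + Jval d phi a) * (2^-1)%:E)%E.

End QPM.

(* Main.v *)
Require Import Defs.
From HB Require Import structures.
From mathcomp Require Import all_boot all_order all_algebra.
From mathcomp Require Import all_classical all_reals all_analysis.
From mathcomp Require Import lra.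
Import Order.TTheory GRing.Theory Num.Theory numFieldNormedType.Exports.
Local Open Scope classical_set_scope.
Local Open Scope ring_scope.
Set Implicit Arguments. Unset Strict Implicit.

Lemma S_fin (R : realType) (X : Type) (d : X -> X -> R) (phi : X -> \bar R) x y :
  (forall x, phi x != -oo%E) -> phi x \is a fin_num -> Sset d phi x y ->
  phi y \is a fin_num /\ fine (phi y) + d y x <= fine (phi x).
Proof.
move=> hN fx; rewrite /Sset /= -(fineK fx).
case E: (phi y) => [r| |] //=.
by move=> _; have := hN y; rewrite E.
Qed.

Lemma S_finI (R : realType) (X : Type) (d : X -> X -> R) (phi : X -> \bar R) x y :
  phi x \is a fin_num -> phi y \is a fin_num ->
  fine (phi y) + d y x <= fine (phi x) -> Sset d phi x y.
Proof.
move=> fx fy h; rewrite /Sset /= -(fineK fx) -(fineK fy) -EFinD lee_fin //.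
Qed.

Lemma S_refl (R : realType) (X : Type) (d : X -> X -> R) (phi : X -> \bar R) x :
  quasi_pseudometric d -> Sset d phi x x.
Proof. by move=> [_ [h0 _]]; rewrite /Sset /= h0 adde0. Qed.

Lemma S_trans (R : realType) (X : Type) (d : X -> X -> R) (phi : X -> \bar R) x y w :
  quasi_pseudometric d -> (forall x, phi x != -oo%E) -> phi x \is a fin_num ->
  Sset d phi x y -> Sset d phi y w -> Sset d phi x w.
Proof.
move=> hd hN fx Sxy Syw.
have [fy hy] := S_fin hN fx Sxy.
have [fw hw] := S_fin hN fy Syw.
apply: S_finI => //.
have [_ [_ ht]] := hd; have := ht w y x; lra.
Qed.

Lemma J_le (R : realType) (X : Type) (d : X -> X -> R) (phi : X -> \bar R) x y :
  Sset d phi x y -> (Jval d phi x <= phi y)%E.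
Proof. by move=> h; apply: ereal_inf_lbound; exists y. Qed.

Lemma J_ge (R : realType) (X : Type) (d : X -> X -> R) (phi : X -> \bar R) (c : R) x :
  (forall x, (c%:E <= phi x)%E) -> (c%:E <= Jval d phi x)%E.
Proof. by move=> hc; apply: le_ereal_inf_tmp => _ [y _ <-]. Qed.

Lemma J_fin (R : realType) (X : Type) (d : X -> X -> R) (phi : X -> \bar R) (c : R) x :
  quasi_pseudometric d -> (forall x, (c%:E <= phi x)%E) -> phi x \is a fin_num ->
  Jval d phi x \is a fin_num /\ c <= fine (Jval d phi x) <= fine (phi x).
Proof.
move=> hd hc fx.
have h1 := @J_ge _ _ d phi c x hc.
have h2 := @J_le _ _ d phi x x (@S_refl _ _ d phi x hd).
move: h1 h2; rewrite -(fineK fx).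
case: (Jval d phi x) => [r| |] //=; rewrite !lee_fin => -> -> //.
Qed.

Lemma step_ex (R : realType) (X : Type) (d : X -> X -> R) (phi : X -> \bar R) (c : R) x :
  quasi_pseudometric d -> (forall x, (c%:E <= phi x)%E) -> phi x \is a fin_num ->
  (Jval d phi x < phi x)%E -> exists y, step_cond d phi x y.
Proof.
move=> hd hc fx hlt.
have [fJ _] := @J_fin _ _ d phi c x hd hc fx.
have : (Jval d phi x < (phi x + Jval d phi x) * (2^-1)%:E)%E.
  move: hlt; rewrite -(fineK fx) -(fineK fJ) -EFinD -EFinM !lte_fin; lra.
move=> /ereal_inf_lt [_ [y Sy <-] hy].
by exists y.
Qed.

Lemma step_real (R : realType) (X : Type) (d : X -> X -> R) (phi : X -> \bar R) (c : R) x y :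
  quasi_pseudometric d -> (forall x, phi x != -oo%E) -> (forall x, (c%:E <= phi x)%E) ->
  phi x \is a fin_num -> step_cond d phi x y ->
  [/\ phi y \is a fin_num, fine (Jval d phi x) < fine (phi x),
      fine (phi y) + d y x <= fine (phi x),
      fine (phi y) < (fine (phi x) + fine (Jval d phi x)) / 2 &
      fine (Jval d phi x) <= fine (phi y) /\ c <= fine (Jval d phi x)].
Proof.
move=> hd hN hc fx [hlt [Sy hy]].
have [fy hy2] := S_fin hN fx Sy.
have [fJ /andP[hJc _]] := @J_fin _ _ d phi c x hd hc fx.
have hJy := @J_le _ _ d phi x y Sy.
move: hlt hy hJy; rewrite -(fineK fx) -(fineK fJ) -(fineK fy) -EFinD -EFinM !lte_fin lee_fin.
move=> h1 h2 h3; split => //.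
Qed.

Lemma chain (R : realType) (X : Type) (d : X -> X -> R) (phi : X -> \bar R) (xs : nat -> X) m :
  quasi_pseudometric d -> (forall x, phi x != -oo%E) ->
  (forall k, (k < m)%N -> phi (xs k) \is a fin_num /\ Sset d phi (xs k) (xs k.+1)) ->
  forall k n, (k <= n)%N -> (n <= m)%N -> Sset d phi (xs k) (xs n).
Proof.
move=> hd hN H k; elim=> [|n IH] hkn hnm.
  by move: hkn; rewrite leqn0 => /eqP ->; apply: S_refl.
case: (ltngtP k n.+1) => [hk||->]; last by apply: S_refl.
- have hkn' : (k <= n)%N by [].
  have [fk _] := H k (leq_ltn_trans hkn' hnm).
  have [_ Sn] := H n hnm.
  exact: S_trans hd hN fk (IH hkn' (ltnW hnm)) Sn.
- by rewrite ltnNge hkn.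
Qed.

Lemma fixed_pt (R : realType) (X : Type) (d : X -> X -> R) (phi : X -> \bar R) z :
  quasi_pseudometric d -> (forall x, phi x != -oo%E) -> phi z \is a fin_num ->
  (forall y, Sset d phi z y -> phi y = phi z) ->
  Jval d phi z = phi z /\
  (forall y, Sset d phi z y -> Sset d phi y `<=` qclosure d [set y]).
Proof.
move=> hd hN fz h; split.
  apply/le_anti/andP; split; first exact: J_le (S_refl _ _ hd).
  by apply: le_ereal_inf_tmp => _ [y Sy <-]; rewrite (h y Sy).
move=> y Sy w Syw r r0; exists y => //.
have [fy _] := S_fin hN fz Sy.
have Szw := S_trans hd hN fz Sy Syw.
have [_ hw] := S_fin hN fy Syw.
move: hw; rewrite (h w Szw) -(h y Sy) => hw.
have : d w y <= 0 by lra.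
move=> ?; lra.
Qed.
Theorem proposition2p14 (R : realType) (X : Type) (d : X -> X -> R)
  (phi : X -> \bar R) (x0 : X) :
  quasi_pseudometric d ->
  (forall x, phi x != -oo%E) ->
  phi_proper phi -> bounded_below phi ->
  phi_dom phi x0 ->
  let SS := Sset d phi in
  let J := Jval d phi in
  (* situation 1 *)
  (exists (m : nat) (x : nat -> X),
     x 0%N = x0 /\
     (forall k, (k < m)%N -> step_cond d phi (x k) (x k.+1)) /\
     phi (x m) = J (x m) /\
     let z := x m in
     (forall k, (k < m)%N -> SS (x k.+1) `<=` SS (x k) /\ (phi (x k.+1) < phi (x k))%E) /\
     (forall k, (k <= m)%N -> SS (x k) z /\ SS z `<=` SS (x k)) /\
     (forall y, SS z y -> phi y = phi z /\ phi z = J z) /\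
     (forall y, SS z y -> SS y `<=` qclosure d [set y]))
  \/
  (* situation 2 *)
  (exists x : nat -> X,
     x 0%N = x0 /\
     (forall n, step_cond d phi (x n) (x n.+1)) /\
     (forall n, SS (x n.+1) `<=` SS (x n) /\ (phi (x n.+1) < phi (x n))%E) /\
     (exists alpha : R,
        (fun n => phi (x n)) @ \oo --> alpha%:E /\
        (fun n => J (x n)) @ \oo --> alpha%:E /\
        (forall n k, SS (x n) (x (n + k)%N)) /\
        right_K_Cauchy d x /\
        (seq_right_K_complete d -> nearly_lsc d phi ->
         exists z : X, qconverges d x z /\
           (forall n, SS (x n) z /\ SS z `<=` SS (x n)) /\
           (forall y, SS z y ->
              phi y = phi z /\ phi z = J z /\ J z = alpha%:E) /\
           (forall y, SS z y -> SS y `<=` qclosure d [set y])))).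
Proof.
move=> hd hN hprop [c hc] fx0 SS J.
have hg : forall x, exists y, (exists y', step_cond d phi x y') -> step_cond d phi x y.
  move=> x; case: (pselect (exists y', step_cond d phi x y')) => [[y' h]|h].
    by exists y'.
  by exists x.
have [g Hg] := choice hg.
have key : forall x, phi x \is a fin_num -> phi x != J x -> step_cond d phi x (g x).
  move=> x fx ne; apply: Hg; apply: (@step_ex _ _ d phi c x hd hc fx).
  by rewrite lt_neqAle eq_sym ne /=; exact: J_le (S_refl _ _ hd).
pose xs := fun n => iter n g x0.
have xsS : forall n, xs n.+1 = g (xs n) by [].
case: (pselect (exists m, phi (xs m) == J (xs m))) => [hex|hnex].
- left.
  have [m Hm Hmin] := ex_minnP hex.
  have neq : forall k, (k < m)%N -> phi (xs k) != J (xs k).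
    by move=> k hk; apply/negP => /Hmin; rewrite leqNgt hk.
  have aux : forall k, (k <= m)%N -> phi (xs k) \is a fin_num.
    elim=> [//|k IH hk].
    have fk := IH (ltnW hk).
    have [fk1 _ _ _ _] := step_real hd hN hc fk (key _ fk (neq k hk)).
    by rewrite xsS.
  have step : forall k, (k < m)%N -> step_cond d phi (xs k) (xs k.+1).
    by move=> k hk; rewrite xsS; apply: key; [apply: aux; apply: ltnW|apply: neq].
  have chainS : forall k n, (k <= n)%N -> (n <= m)%N -> Sset d phi (xs k) (xs n).
    apply: chain => // k hk; split; first by apply: aux; apply: ltnW.
    by have [_ [? _]] := step k hk.
  have fz := aux m (leqnn m).
  have hfix : forall y, Sset d phi (xs m) y -> phi y = phi (xs m).
    move=> y Sy; have [fy hy] := S_fin hN fz Sy.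
    have h1 : (phi (xs m) <= phi y)%E by rewrite {1}(eqP Hm); exact: J_le Sy.
    apply/le_anti/andP; split => //.
    move: h1; rewrite -(fineK fz) -(fineK fy) !lee_fin.
    have [hnn _] := hd; have := hnn y (xs m); lra.
  have [hJ hcl] := fixed_pt hd hN fz hfix.
  exists m, xs; split; first by [].
  split; first exact: step.
  split; first exact/eqP.
  cbv zeta.
  split.
    move=> k hk; have fk := aux k (ltnW hk).
    have [fk1 h1 h2 h3 _] := step_real hd hN hc fk (step k hk).
    split.
      move=> y Sy; apply: S_trans hd hN fk _ Sy.
      by have [_ [? _]] := step k hk.
    rewrite -(fineK fk) -(fineK fk1) lte_fin; lra.
  split.
    move=> k hk; split; first exact: chainS.
    by move=> y Sy; apply: S_trans hd hN (aux k hk) (chainS k m hk (leqnn m)) Sy.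
  split => //.
  by move=> y Sy; split; [exact: hfix|].
- right.
  have neq : forall k, phi (xs k) != J (xs k).
    by move=> k; apply/negP => h; apply: hnex; exists k.
  have aux : forall k, phi (xs k) \is a fin_num.
    elim=> [//|k IH].
    have [fk1 _ _ _ _] := step_real hd hN hc IH (key _ IH (neq k)).
    by rewrite xsS.
  have step : forall k, step_cond d phi (xs k) (xs k.+1).
    by move=> k; rewrite xsS; apply: key.
  have chainS : forall n k, Sset d phi (xs n) (xs (n + k)%N).
    move=> n k; apply: (@chain _ _ d phi xs (n + k)) => //; last by rewrite leq_addr.
    move=> j _; split; first exact: aux.
    by have [_ [? _]] := step j.
  exists xs; split; first by [].
  split; first exact: step.
  have sr : forall n, [/\ phi (xs n.+1) \is a fin_num,
      fine (Jval d phi (xs n)) < fine (phi (xs n)),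
      fine (phi (xs n.+1)) + d (xs n.+1) (xs n) <= fine (phi (xs n)),
      fine (phi (xs n.+1)) < (fine (phi (xs n)) + fine (Jval d phi (xs n))) / 2 &
      fine (Jval d phi (xs n)) <= fine (phi (xs n.+1)) /\ c <= fine (Jval d phi (xs n))].
    by move=> n; apply: step_real hd hN hc (aux n) (step n).
  split.
    move=> n; have [fk1 h1 h2 h3 _] := sr n; split.
      move=> y Sy; apply: S_trans hd hN (aux n) _ Sy.
      by have [_ [? _]] := step n.
    rewrite -(fineK (aux n)) -(fineK fk1) lte_fin; lra.
  pose u := fun n => fine (phi (xs n)).
  pose v := fun n => fine (J (xs n)).
  have hu : forall n, u n.+1 < u n.
    by move=> n; have [_ h1 h2 h3 _] := sr n; rewrite /u; lra.
  have hv1 : forall n, v n <= u n.+1.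
    by move=> n; have [_ h1 h2 h3 [h4 h5]] := sr n; rewrite /u /v; lra.
  have hv2 : forall n, 2 * u n.+1 - u n < v n.
    by move=> n; have [_ h1 h2 h3 [h4 h5]] := sr n; rewrite /u /v; lra.
  have huc : forall n, c <= u n.
    move=> n; have := hc (xs n); rewrite -(fineK (aux n)) lee_fin //.
  have unoninc : {homo u : n m / (n <= m)%N >-> m <= n}.
    by apply/nonincreasing_seqP => n; apply: ltW.
  have ustrict : forall i j, (i < j)%N -> u j < u i.
    by move=> i j hij; apply: le_lt_trans (unoninc _ _ hij) (hu i).
  have ucvg : cvgn u.
    apply: nonincreasing_is_cvgn => //.
    by exists c => _ [n _ <-]; apply: huc.
  set alpha := limn u.
  have hua : u @ \oo --> alpha by [].
  have hge : forall n, alpha <= u n by apply: nonincreasing_cvgn_ge.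
  have hs : (fun n => u n.+1) @ \oo --> alpha by rewrite (cvg_shiftS u).
  have hf : (fun n => u n.+1 + (u n.+1 - u n)) @ \oo --> alpha + (alpha - alpha).
    exact: cvgD hs (cvgB hs hua).
  rewrite subrr addr0 in hf.
  have hvc : v @ \oo --> alpha.
    apply: (squeeze_cvgr _ hf hs); apply: nearW => n.
    have := hv1 n; have := hv2 n; move=> h1 h2; apply/andP; split; lra.
  have hdist : forall e, 0 < e -> exists N, forall n, (N <= n)%N -> u n < alpha + e.
    move=> e e0; move/cvgrPdist_lt: hua => /(_ e e0) [N _ HN].
    exists N => n hn; have := HN n hn; have := hge n.
    rewrite /= distrC ger0_norm ?subr_ge0 //; first by move=> _ ?; lra.
  exists alpha; split.
    by apply/fine_cvgP; split; [apply: nearW => n; exact: aux|exact: hua].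
  split.
    apply/fine_cvgP; split; last exact: hvc.
    by apply: nearW => n; have [? _] := @J_fin _ _ d phi c (xs n) hd hc (aux n).
  split; first exact: chainS.
  have cauchy : right_K_Cauchy d xs.
    move=> e e0; have [N HN] := hdist e e0; exists N => n k hn.
    have [_ hk] := S_fin hN (aux n) (chainS n k).
    have := HN n hn; have := hge (n + k)%N; rewrite /u => h1 h2; lra.
  split; first exact: cauchy.
  move=> hcomp hlsc.
  have [z hz] := hcomp xs cauchy.
  exists z; split; first exact: hz.
  have dist : forall i j, i <> j -> xs i <> xs j.
    move=> i j hij hx; case: (ltngtP i j) => [h|h|h]; last by apply: hij.
      by have := ustrict _ _ h; rewrite /u hx ltxx.
    by have := ustrict _ _ h; rewrite /u hx ltxx.
  have hphi : (fun n => phi (xs n)) @ \oo --> alpha%:E.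
    by apply/fine_cvgP; split; [apply: nearW => n; exact: aux|exact: hua].
  have hl := hlsc xs z dist hz.
  rewrite (cvg_limn_einf_sup hphi).1 in hl.
  have fz : phi z \is a fin_num.
    move: hl (hN z); case: (phi z) => [r| |] //=.
  have fzle : fine (phi z) <= alpha by move: hl; rewrite -(fineK fz) lee_fin.
  have Sz : forall n, Sset d phi (xs n) z.
    move=> n; apply: S_finI => //.
    suff : d z (xs n) <= u n - alpha by rewrite /u; lra.
    apply/ler_addgt0Pr => e e0.
    move/cvgrPdist_lt: (hz) => /(_ e e0) [N _ HN].
    have := HN (maxn N n) (leq_maxl _ _).
    have := chainS n (maxn N n - n)%N; rewrite subnKC ?leq_maxr // => hS.
    have [_ hk] := S_fin hN (aux n) hS.
    have := hge (maxn N n).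
    have [_ [_ ht]] := hd; have := ht z (xs (maxn N n)) (xs n).
    rewrite /= sub0r normrN ger0_norm; last by have [hnn _] := hd; apply: hnn.
    rewrite /u; lra.
  have hval : forall y, Sset d phi z y -> fine (phi y) = alpha /\ phi y \is a fin_num.
    move=> y Sy; have [fy hy] := S_fin hN fz Sy.
    split => //; apply/le_anti/andP; split.
      have [hnn _] := hd; have := hnn y z; lra.
    apply/ler_addgt0Pr => e e0.
    have [N HN] := hdist e e0.
    have hSy : Sset d phi (xs N) y := S_trans hd hN (aux N) (Sz N) Sy.
    have hJ : v N <= fine (phi y).
      have := J_le hSy; rewrite -(fineK fy).
      have [fJ _] := @J_fin _ _ d phi c (xs N) hd hc (aux N).
      by rewrite /v -(fineK fJ) lee_fin.
    have := HN N (leqnn N); have := hv2 N; have := hge N.+1; lra.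
  have hz_al : forall y, Sset d phi z y -> phi y = alpha%:E.
    by move=> y Sy; have [h1 h2] := hval y Sy; rewrite -(fineK h2) h1.
  have hfix : forall y, Sset d phi z y -> phi y = phi z.
    by move=> y Sy; rewrite (hz_al y Sy) (hz_al z (S_refl _ _ hd)).
  have [hJ hcl] := fixed_pt hd hN fz hfix.
  split.
    move=> n; split; first exact: Sz.
    by move=> y Sy; apply: S_trans hd hN (aux n) (Sz n) Sy.
  split => //.
  move=> y Sy; split; first exact: hfix.
  split; first by rewrite /J hJ.
  by rewrite /J hJ; apply: hz_al; apply: S_refl.
Qed.
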